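(* Let $j_1,j_2$ be real numbers, $p\in\{0,1\}$, and let $\Psi_1$ (of parity $p$) and $\Psi_2$ be the generating highest-weight vectors of two $\mathfrak{sl}(2|1)$-modules of the same chirality: either both left-chiral, $[j_1,-j_1]$ and $[j_2,-j_2]$ (upper signs, $\mathbf X=\mathbf V_+$), or both right-chiral, $[j_1,j_1]$ and $[j_2,j_2]$ (lower signs, $\mathbf X=\mathbf W_+$). Let $\mathbf U_+=\mathbf V_++\mathbf W_+$. Then for every $n\ge 0$, $$n!\,(-1)^{p+1}\sum_{k_1+k_2=2n+1}\frac{(-1)^{\lfloor (k_1+1-p)/2\rfloor}}{\Gamma\!\left(1+\lfloor\frac{k_1}{2}\rfloor\right)\Gamma\!\left(1+\lfloor\frac{k_2}{2}\rfloor\right)\Gamma\!\left(2j_1+\lfloor\frac{k_1+1}{2}\rfloor\right)\Gamma\!\left(2j_2+\lfloor\frac{k_2+1}{2}\rfloor\right)}\ \mathbf U_+^{k_1}\Psi_1\otimes\mathbf U_+^{k_2}\Psi_2$$ equals $$\sum_{n_1+n_2=n}\binom{n}{n_1}(-1)^{n_1}\left[\frac{\mathbf L_+^{n_1}\mathbf X\Psi_1\otimes\mathbf L_+^{n_2}\Psi_2}{\Gamma(2j_1+1+n_1)\Gamma(2j_2+n_2)}-(-1)^p\frac{\mathbf L_+^{n_1}\Psi_1\otimes\mathbf L_+^{n_2}\mathbf X\Psi_2}{\Gamma(2j_1+n_1)\Gamma(2j_2+1+n_2)}\right],$$ and this vector is a highest-weight vector of the tensor product, with $\mathbf L$-eigenvalue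 $j_1+j_2+n+\tfrac12$ and $\mathbf B$-eigenvalue $\mp(j_1+j_2)\pm\tfrac12$.
   Context: $\mathfrak{sl}(2|1)$ denotes the complex Lie superalgebra with even basis $\mathbf L_+,\mathbf L_-,\mathbf L,\mathbf B$ and odd basis $\mathbf V_+,\mathbf V_-,\mathbf W_+,\mathbf W_-$, with relations: $[\mathbf L_+,\mathbf L_-]=2\mathbf L$, $[\mathbf L,\mathbf L_\pm]=\pm\mathbf L_\pm$, $\mathbf B$ commutes with $\mathbf L_\pm,\mathbf L$; for $\mathbf X\in\{\mathbf V,\mathbf W\}$: $[\mathbf L,\mathbf X_\pm]=\pm\tfrac12\mathbf X_\pm$, $[\mathbf L_+,\mathbf X_-]=\mathbf X_+$, $[\mathbf L_-,\mathbf X_+]=\mathbf X_-$, $[\mathbf L_+,\mathbf X_+]=[\mathbf L_-,\mathbf X_-]=0$; $[\mathbf B,\mathbf V_\pm]=\tfrac12\mathbf V_\pm$, $[\mathbf B,\mathbf W_\pm]=-\tfrac12\mathbf W_\pm$; $\{\mathbf V_a,\mathbf V_b\}=\{\mathbf W_a,\mathbf W_b\}=0$, $\{\mathbf V_+,\mathbf W_+\}=\mathbf L_+$, $\{\mathbf V_+,\mathbf W_-\}=-\mathbf L+\mathbf B$, $\{\mathbf V_-,\mathbf W_+\}=-\mathbf L-\mathbf B$, $\{\mathbf V_-,\mathbf W_-\}=-\mathbf L_-$. The left-chiral module $[J,-J]$ is the $\mathbb Z_2$-graded module generated by a homogeneous vector $\Omega$ with $\mathbf L_-\Omega=\mathbf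 V_-\Omega=\mathbf W_-\Omega=\mathbf W_+\Omega=0$, $\mathbf L\Omega=J\Omega$, $\mathbf B\Omega=-J\Omega$ (basis $\mathbf L_+^n\Omega,\mathbf L_+^n\mathbf V_+\Omega$); the right-chiral module $[J,J]$ is generated by $\Omega$ with $\mathbf L_-\Omega=\mathbf V_-\Omega=\mathbf W_-\Omega=\mathbf V_+\Omega=0$, $\mathbf L\Omega=J\Omega$, $\mathbf B\Omega=J\Omega$ (basis $\mathbf L_+^n\Omega,\mathbf L_+^n\mathbf W_+\Omega$). A highest-weight vector is one annihilated by $\mathbf L_-,\mathbf V_-,\mathbf W_-$. Tensor products carry the action $G(x\otimes y)=Gx\otimes y+(-1)^{|G||x|}x\otimes Gy$ for homogeneous $G,x$. Here $1/\Gamma$ is the (entire) reciprocal Gamma function and $\lfloor\cdot\rfloor$ the floor function. *)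

(* Defs.v *)
From HB Require Import structures.
From mathcomp Require Import all_boot all_order all_algebra.
From mathcomp Require Import all_classical all_reals all_analysis.
From mathcomp Require Import complex.
Set Implicit Arguments. Unset Strict Implicit. Unset Printing Implicit Defensive.
Import Order.TTheory GRing.Theory Num.Theory.
Import numFieldNormedType.Exports.
Local Open Scope ring_scope.
Local Open Scope complex_scope.

(* The reciprocal Gamma function (entire), defined by Gauss' formula   *)
(* valid for every real x (it vanishes at x = 0, -1, -2, ...).          *)
Definition gauss_seq (R : realType) (x : R) (m : nat) : R :=
  (\prod_(i < m.+1) (x + i%:R)) / (m`!%:R * ((m%:R : R) `^ x)).
Definition rgamma (R : realType) (x : R) : R := limn (gauss_seq x).

(* Index set of the basis of a chiral module:                          *)
(*   (false, n)  <->  L_+^n Omega                                      *)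
(*   (true,  n)  <->  L_+^n X Omega     (X = V_+ left, X = W_+ right)   *)
(* A vector is given by its coordinates in this basis (we allow formal *)
(* coordinate functions; all vectors occurring below are finite        *)
Definition idx := (bool * nat)%type.
Definition vec (R : realType) := idx -> R[i].
Definition tvec (R : realType) := idx -> idx -> R[i].

Inductive gen := GLp | GLm | GL | GB | GVp | GVm | GWp | GWm.

Definition gen_odd (g : gen) : bool :=
  match g with GVp | GVm | GWp | GWm => true | _ => false end.

Definition smod (R : realType) := gen -> vec R -> vec R.

Definition Omega (R : realType) : vec R :=
  fun i => if i == (false, 0%N) then 1 else 0.

(* Coordinates of L_+ v (common to both chiralities):
   L_+ (L_+^n Y) = L_+^(n+1) Y. *)
Definition shiftL (R : realType) (v : vec R) : vec R :=
  fun i => match i with (b, m.+1) => v (b, m) | (_, 0%N) => 0 end.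

(* Left-chiral module [J,-J]; basis e_n = L_+^n Omega, f_n = L_+^n V_+ Omega.
   Action on the basis (derived from the defining relations):
     L_+ e_n = e_(n+1)                 L_+ f_n = f_(n+1)
     L_- e_n = -n(2J+n-1) e_(n-1)      L_- f_n = -n(2J+n) f_(n-1)
     L   e_n = (J+n) e_n               L   f_n = (J+n+1/2) f_n
     B   e_n = -J e_n                  B   f_n = (-J+1/2) f_n
     V_+ e_n = f_n                     V_+ f_n = 0
     V_- e_n = -n f_(n-1)              V_- f_n = 0
     W_+ e_n = 0                       W_+ f_n = e_(n+1)
     W_- e_n = 0                       W_- f_n = -(2J+n) e_n
   Below: the induced action on coordinates. *)
Definition lchiral (R : realType) (J : R) : smod R :=
  fun g v i =>
  let: (b, m) := i in
  match g with
  | GLp => shiftL v i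
  | GLm => - ((m.+1)%:R * (2 * J + m%:R + (b : nat)%:R))%:C * v (b, m.+1)
  | GL  => (J + m%:R + (b : nat)%:R / 2)%:C * v (b, m)
  | GB  => (- J + (b : nat)%:R / 2)%:C * v (b, m)
  | GVp => if b then v (false, m) else 0
  | GVm => if b then - (m.+1)%:R%:C * v (false, m.+1) else 0
  | GWp => if b then 0 else (match m with 0%N => 0 | m'.+1 => v (true, m') end)
  | GWm => if b then 0 else - (2 * J + m%:R)%:C * v (true, m)
  end.

(* Right-chiral module [J,J]; basis e_n = L_+^n Omega, f_n = L_+^n W_+ Omega.
     L_+, L_-, L as above;
     B   e_n = J e_n                   B   f_n = (J-1/2) f_n
     W_+ e_n = f_n                     W_+ f_n = 0
     W_- e_n = -n f_(n-1)              W_- f_n = 0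
     V_+ e_n = 0                       V_+ f_n = e_(n+1)
     V_- e_n = 0                       V_- f_n = -(2J+n) e_n          *)
Definition rchiral (R : realType) (J : R) : smod R :=
  fun g v i =>
  let: (b, m) := i in
  match g with
  | GLp => shiftL v i
  | GLm => - ((m.+1)%:R * (2 * J + m%:R + (b : nat)%:R))%:C * v (b, m.+1)
  | GL  => (J + m%:R + (b : nat)%:R / 2)%:C * v (b, m)
  | GB  => (J - (b : nat)%:R / 2)%:C * v (b, m)
  | GWp => if b then v (false, m) else 0
  | GWm => if b then - (m.+1)%:R%:C * v (false, m.+1) else 0
  | GVp => if b then 0 else (match m with 0%N => 0 | m'.+1 => v (true, m') end)
  | GVm => if b then 0 else - (2 * J + m%:R)%:C * v (true, m)
  end.

Definition chiral (R : realType) (right : bool) (J : R) : smod R :=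
  if right then rchiral J else lchiral J.

Definition genX (right : bool) : gen := if right then GWp else GVp.

Definition Uplus (R : realType) (M : smod R) (v : vec R) : vec R :=
  M GVp v + M GWp v.

Definition tens (R : realType) (x y : vec R) : tvec R :=
  fun i j => x i * y j.

(* Action on the tensor product M1 (x) M2, where the generating vector of
   M1 has parity p (so the basis vector indexed by (b, n) has parity p+b):
     G (x (x) y) = G x (x) y + (-1)^(|G||x|) x (x) G y,
   extended linearly. *)
Definition tact (R : realType) (p : bool) (M1 M2 : smod R) (g : gen)
    (t : tvec R) : tvec R :=
  fun i j => M1 g (fun i' => t i' j) i
             + (-1) ^+ (gen_odd g && (p (+) i.1)) * M2 g (t i) j.

(* Main.v *)
Require Import Defs.
From HB Require Import structures.
From mathcomp Require Import all_boot all_order all_algebra.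
From mathcomp Require Import all_classical all_reals all_analysis.
From mathcomp Require Import complex.
From mathcomp Require Import ring lra zify.
Import Order.TTheory GRing.Theory Num.Theory.
Import numFieldNormedType.Exports.
Local Open Scope ring_scope.
Local Open Scope complex_scope.

Local Open Scope classical_set_scope.

Section RG.
Variable R : realType.

Lemma gauss_rel (x : R) (m : nat) : (0 < m)%N ->
  gauss_seq x m * (x + m%:R + 1) = x * m%:R * gauss_seq (x + 1) m.
Proof.
move=> m0; rewrite /gauss_seq.
have hm : (0 : R) < m%:R by rewrite ltr0n.
have hp : (m%:R : R) `^ (x + 1) = m%:R `^ x * m%:R.
  rewrite powRD; last by apply/implyP => _; rewrite gt_eqF.
  by rewrite powRr1 // ler0n.
rewrite hp [in LHS]big_ord_recl [in RHS]big_ord_recr /=.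
have -> : \prod_(i < m) (x + 1 + (widen_ord (leqnSn m) i)%:R) =
          \prod_(i < m) (x + (lift ord0 i)%:R).
  apply: eq_bigr => i _; rewrite /= /bump /= add1n -addn1 natrD; ring.
have h1 : (m`!%:R : R) != 0 by rewrite pnatr_eq0 -lt0n fact_gt0.
have h2 : (m%:R : R) `^ x != 0 by rewrite gt_eqF // powR_gt0.
rewrite addr0 /=. field; rewrite ?h1 ?h2 ?gt_eqF //.
Qed.

Lemma lim_dvg (u : nat -> R) : ~ cvgn u -> limn u = 0.
Proof.
move=> h; rewrite /lim /lim_in; case: xgetP => // l _ hl.
by exfalso; apply: h; apply: cvgP hl.
Qed.

Lemma invn_cvg0 : (fun m : nat => (m%:R : R)^-1) @ \oo --> 0.
Proof. rewrite -cvg_shiftS; exact: cvg_harmonic. Qed.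

Definition hh (x : R) (m : nat) : R := (1 + (m%:R)^-1 * (x + 1))^-1.

Lemma hh_cvg (x : R) : hh x @ \oo --> (1:R).
Proof.
have H : (fun m : nat => 1 + (m%:R)^-1 * (x+1)) @ \oo --> (1 + 0 * (x+1) : R).
  apply: cvgD; first exact: cvg_cst.
  apply: cvgMl; exact: invn_cvg0.
rewrite mul0r addr0 in H.
have := cvgV (oner_neq0 R) H.
rewrite invr1 => h; exact: h.
Qed.

Lemma hh_eq (x : R) (m : nat) : (0 < m)%N -> x + m%:R + 1 != 0 ->
  hh x m = m%:R / (x + m%:R + 1).
Proof.
move=> m0 hx; have hm : (m%:R : R) != 0 by rewrite pnatr_eq0 -lt0n.
rewrite /hh.
have -> : 1 + (m%:R)^-1 * (x + 1) = (x + m%:R + 1) / m%:R by field.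
by rewrite invf_div.
Qed.

Lemma gauss_near (x : R) :
  \forall m \near \oo, (0 < m)%N /\ x + m%:R + 1 != 0 /\
     x * gauss_seq (x + 1) m * hh x m = gauss_seq x m.
Proof.
near=> m.
have m0 : (0 < m)%N by near: m; exact: nbhs_infty_gt.
have hx : x + m%:R + 1 != 0.
  have : - x - 1 < m%:R by near: m; exact: nbhs_infty_gtr.
  move=> h; apply/eqP => e; move: h; rewrite ltNge => /negP; apply.
  have -> : (m%:R : R) = - x - 1 + (x + m%:R + 1) by ring.
  by rewrite e addr0.
split => //; split => //.
rewrite hh_eq //.
have hm : (m%:R : R) != 0 by rewrite pnatr_eq0 -lt0n.
have := @gauss_rel x m m0 => e.
apply: (mulIf hx); rewrite e; field; exact: hx.
Unshelve. all: by end_near.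
Qed.

Lemma rgamma_rec (x : R) : rgamma x = x * rgamma (x + 1).
Proof.
rewrite /rgamma.
have [cv|ncv] := pselect (cvgn (gauss_seq (x + 1))).
  have H : (fun m => x * gauss_seq (x + 1) m * hh x m) @ \oo -->
           x * limn (gauss_seq (x + 1)) * 1.
    apply: cvgM; last exact: hh_cvg.
    apply: cvgM; [exact: cvg_cst | exact: cv].
  rewrite mulr1 in H.
  apply: cvg_lim => //.
  apply: cvg_trans H.
  apply: near_eq_cvg.
  near=> m.
  have [_ [_ e]] : (0 < m)%N /\ x + m%:R + 1 != 0 /\
     x * gauss_seq (x + 1) m * hh x m = gauss_seq x m by near: m; exact: gauss_near.
  by rewrite e.
have [->|x0] := eqVneq x 0.
  rewrite mul0r.
  have -> : gauss_seq 0 = (fun _ : nat => 0 : R).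
    apply: boolp.funext => m; rewrite /gauss_seq big_ord_recl.
    have -> : ((@ord0 m : nat)%:R : R) = 0 by [].
    by rewrite addr0 !mul0r.
  exact: lim_cst.
have ncu : ~ cvgn (gauss_seq x).
  move=> cu; apply: ncv.
  have H : (fun m => gauss_seq x m * (x^-1 * (hh x m)^-1)) @ \oo -->
           limn (gauss_seq x) * (x^-1 * 1^-1).
    apply: cvgM; first exact: cu.
    apply: cvgM; first exact: cvg_cst.
    apply: cvgV; [exact: oner_neq0 | exact: hh_cvg].
  apply: cvgP; apply: cvg_trans H.
  apply: near_eq_cvg.
  near=> m.
  have [m0 [hx e]] : (0 < m)%N /\ x + m%:R + 1 != 0 /\
     x * gauss_seq (x + 1) m * hh x m = gauss_seq x m by near: m; exact: gauss_near.
  have hh0 : hh x m != 0.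
    rewrite hh_eq // mulf_neq0 ?invr_eq0 //; by rewrite pnatr_eq0 -lt0n.
  rewrite -e /=; field; by rewrite x0 hh0.
by rewrite (@lim_dvg _ ncu) (@lim_dvg _ ncv) mulr0.
Unshelve. all: by end_near.
Qed.

Lemma rgamma1 : rgamma (1 : R) = 1.
Proof.
rewrite /rgamma.
suff H2 : gauss_seq 1 @ \oo --> (1:R) by exact: cvg_lim H2.
have H : (fun m : nat => 1 + (m%:R)^-1) @ \oo --> (1 + 0 : R).
  apply: cvgD; [exact: cvg_cst | exact: invn_cvg0].
rewrite addr0 in H; apply: cvg_trans H.
apply: near_eq_cvg; near=> m.
have m0 : (0 < m)%N by near: m; exact: nbhs_infty_gt.
have hm : (m%:R : R) != 0 by rewrite pnatr_eq0 -lt0n.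
rewrite /gauss_seq powRr1 ?ler0n //.
have -> : \prod_(i < m.+1) (1 + i%:R) = (m.+1)`!%:R :> R.
  rewrite fact_prod big_add1 /= big_mkord natr_prod.
  by apply: eq_bigr => i _; rewrite addrC natr1.
rewrite (_ : (m.+1)`! = (m.+1 * m`!)%N) // natrM.
have hf : ((m`!)%:R : R) != 0 by rewrite pnatr_eq0 -lt0n fact_gt0.
rewrite /=; field; by rewrite hf hm.
Unshelve. all: by end_near.
Qed.

Lemma rgamma_nat (a : nat) : rgamma (1 + a%:R : R) = (a`!%:R)^-1.
Proof.
elim: a => [|a IH]; first by rewrite addr0 rgamma1 invr1.
rewrite rgamma_rec in IH.
have ha : (1 + a%:R : R) != 0 by rewrite addrC natr1 pnatr_eq0.
have hf : ((a`!)%:R : R) != 0 by rewrite pnatr_eq0 -lt0n fact_gt0.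
move/(canRL (mulKf ha)): IH => IH.
have -> : (1 + a.+1%:R : R) = 1 + a%:R + 1 by rewrite -natr1; ring.
rewrite IH (_ : (a.+1)`! = (a.+1 * a`!)%N) // natrM -natr1.
field; rewrite hf /=; by rewrite addrC in ha.
Qed.


Lemma Grec (c : R) (k : nat) : rgamma (c + k%:R) = (c + k%:R) * rgamma (c + k.+1%:R).
Proof. by rewrite rgamma_rec -natr1 addrA. Qed.

Definition alpha (j1 j2 : R) (n m1 m2 : nat) : R :=
  n`!%:R * (-1) ^+ m1 / (m1`!%:R * m2`!%:R) * rgamma (2 * j1 + m1.+1%:R) * rgamma (2 * j2 + m2%:R).
Definition beta (j1 j2 : R) (p : bool) (n m1 m2 : nat) : R :=
  - ((-1) ^+ p * (n`!%:R * (-1) ^+ m1 / (m1`!%:R * m2`!%:R) * rgamma (2 * j1 + m1%:R) * rgamma (2 * j2 + m2.+1%:R))).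
Arguments alpha : simpl never.
Arguments beta : simpl never.
Arguments rgamma : simpl never.
Definition Tf (j1 j2 : R) (p : bool) (n : nat) : tvec R := fun i j =>
  if (i.2 + j.2 == n)%N then
    (if i.1 then (if j.1 then 0 else (alpha j1 j2 n i.2 j.2)%:C)
     else (if j.1 then (beta j1 j2 p n i.2 j.2)%:C else 0))
  else 0.

Lemma sc1 (F : numDomainType) m : (m`!%:R : F) != 0.
Proof. by rewrite pnatr_eq0 -lt0n fact_gt0. Qed.
Lemma sc2 (F : numDomainType) m : (1 + m%:R : F) != 0.
Proof. by rewrite addrC natr1 pnatr_eq0. Qed.
Lemma scal_at (a : R[i]) (t : tvec R) i j : (a *: t) i j = a * t i j.
Proof. by []. Qed.

Ltac fin j1 j2 m1 m2 := rewrite /alpha /beta ?(Grec (2*j1) m1) ?(Grec (2*j1) m1.+1)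
   ?(Grec (2*j2) m2) ?(Grec (2*j2) m2.+1) ?factS ?natrM ?exprS;
   field; rewrite ?sc1 ?sc2 //.

Lemma hw_Lm j1 j2 p n r : tact p (chiral r j1) (chiral r j2) GLm (Tf j1 j2 p n) = 0.
Proof.
apply: boolp.funext => -[b1 m1]; apply: boolp.funext => -[b2 m2].
rewrite [RHS](_ : _ = 0) //.
rewrite /tact /chiral; case: r; case: b1; case: b2; rewrite /= /Tf /= ?if_same ?addSn ?addnS.
all: try case: eqP => [e|_]; rewrite ?mulr0 ?addr0 ?mul0r //.
all: subst n; fin j1 j2 m1 m2.
Qed.

Lemma hw_Vm j1 j2 p n r : tact p (chiral r j1) (chiral r j2) GVm (Tf j1 j2 p n) = 0.
Proof.
apply: boolp.funext => -[b1 m1]; apply: boolp.funext => -[b2 m2].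
rewrite [RHS](_ : _ = 0) //.
rewrite /tact /chiral; case: p; case: r; case: b1; case: b2; rewrite /= /Tf /= ?if_same ?addSn ?addnS.
all: try case: eqP => [e|_]; rewrite ?mulr0 ?addr0 ?mul0r //.
all: subst n; fin j1 j2 m1 m2.
Qed.

Lemma hw_Wm j1 j2 p n r : tact p (chiral r j1) (chiral r j2) GWm (Tf j1 j2 p n) = 0.
Proof.
apply: boolp.funext => -[b1 m1]; apply: boolp.funext => -[b2 m2].
rewrite [RHS](_ : _ = 0) //.
rewrite /tact /chiral; case: p; case: r; case: b1; case: b2; rewrite /= /Tf /= ?if_same ?addSn ?addnS.
all: try case: eqP => [e|_]; rewrite ?mulr0 ?addr0 ?mul0r //.
all: subst n; fin j1 j2 m1 m2.
Qed.

Lemma hw_L j1 j2 p n r : tact p (chiral r j1) (chiral r j2) GL (Tf j1 j2 p n) =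
   (j1 + j2 + n%:R + 1 / 2)%:C *: Tf j1 j2 p n.
Proof.
apply: boolp.funext => -[b1 m1]; apply: boolp.funext => -[b2 m2].
rewrite scal_at.
rewrite /tact /chiral; case: r; case: b1; case: b2; rewrite /= /Tf /= ?if_same.
all: try case: eqP => [e|_]; rewrite ?mulr0 ?addr0 ?mul0r //.
all: by subst n; rewrite natrD; field.
Qed.

Lemma hw_B j1 j2 p n r : tact p (chiral r j1) (chiral r j2) GB (Tf j1 j2 p n) =
   (if r then (j1 + j2) - 1 / 2 else - (j1 + j2) + 1 / 2)%:C *: Tf j1 j2 p n.
Proof.
apply: boolp.funext => -[b1 m1]; apply: boolp.funext => -[b2 m2].
rewrite scal_at.
rewrite /tact /chiral; case: r; case: b1; case: b2; rewrite /= /Tf /= ?if_same.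
all: try case: eqP => [e|_]; rewrite ?mulr0 ?addr0 ?mul0r //.
all: by field.
Qed.
End RG.

Local Close Scope classical_set_scope.

Section V.
Variable R : realType.

Definition ev (b : bool) (m : nat) : vec R := fun i => if (i.1 == b) && (i.2 == m)%N then 1 else 0.
Definition shU (v : vec R) : vec R := fun i =>
  let: (b, m) := i in if b then v (false, m) else if m is m'.+1 then v (true, m') else 0.

Lemma vadd_at (f g : vec R) i : (f + g) i = f i + g i.
Proof. by []. Qed.

Lemma Uplus_chiral r J : Uplus (chiral r J) = shU.
Proof.
apply: boolp.funext => v; apply: boolp.funext => -[b [|m]];
by case: r; case: b; rewrite /Uplus vadd_at /= ?addr0 ?add0r.
Qed.

Lemma Omega_ev : Omega R = ev false 0.
Proof. by apply: boolp.funext => -[b m]; rewrite /Omega /ev xpair_eqE. Qed.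

Lemma iterU k : iter k shU (ev false 0) = ev (odd k) k./2.
Proof.
elim: k => [|k IH] //=; rewrite IH.
apply: boolp.funext => -[b [|m]]; rewrite /ev /= ?uphalf_half; case: b; case: (odd k) => /=;
  rewrite ?add0n ?add1n //=.
Qed.

Lemma evk_at k b m : ev (odd k) k./2 (b, m) = if (k == b + m.*2)%N then 1 else 0.
Proof.
rewrite /ev /=; congr (if _ then _ else _).
apply/idP/idP.
  case/andP => /eqP -> /eqP ->; by rewrite odd_double_half.
move/eqP => ->; case: b; by rewrite /= ?oddS ?odd_double ?doubleK //= ?uphalf_double.
Qed.

Lemma Lp_chiral r J : chiral r J GLp = @shiftL R.
Proof. by apply: boolp.funext => v; apply: boolp.funext => -[b m]; case: r. Qed.

Lemma iterL b k : iter k (@shiftL R) (ev b 0) = ev b k.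
Proof.
elim: k => [|k IH] //=; rewrite IH.
by apply: boolp.funext => -[b' [|m]]; rewrite /ev /shiftL /= ?andbF.
Qed.

Lemma X_chiral r J : chiral r J (genX r) (Omega R) = ev true 0.
Proof. by apply: boolp.funext => -[b m]; case: r; case: b. Qed.

Lemma tsum_at N (F : 'I_N -> tvec R) i j : (\sum_(k < N) F k) i j = \sum_(k < N) F k i j.
Proof.
apply: (big_rec2 (fun (x : tvec R) (y : R[i]) => x i j = y)) => //.
by move=> k x y _ <-.
Qed.
End V.

Lemma sum_pick (R : realType) (N K : nat) (F : 'I_N -> R[i]) (hK : (K < N)%N) :
  (forall k : 'I_N, (k : nat) != K -> F k = 0) -> \sum_(k < N) F k = F (Ordinal hK).
Proof.
move=> h; rewrite (bigD1 (Ordinal hK)) //= big1 ?addr0 //.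
Qed.

Lemma nA m : (((m.*2.+1).+1 - 1)./2 = m)%N. Proof. lia. Qed.
Lemma nB m : (((m.*2).+1 - 1)./2 = m)%N. Proof. lia. Qed.
Lemma n7 m : ((m.*2)./2 = m)%N. Proof. lia. Qed.
Lemma n8 m : (uphalf (m.*2) = m)%N. Proof. lia. Qed.
Lemma n9 m : ((m.*2.+1)./2 = m)%N. Proof. lia. Qed.
Lemma n10 m : (uphalf (m.*2.+1) = m.+1)%N. Proof. lia. Qed.
Lemma nC a b : (((a + b).*2.+1 - a.*2.+1) = b.*2)%N. Proof. lia. Qed.
Lemma nD a b : (((a + b).*2.+1 - a.*2) = b.*2.+1)%N. Proof. lia. Qed.

Ltac nzt n K := let hK := fresh "hK" in let hk0 := fresh "hk0" in
  have hK : (K < n.*2.+2)%N := ltac:(lia);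
  rewrite (@sum_pick _ _ _ _ hK); [ | by move=> ? hk0; rewrite (negbTE hk0) ?mul0r ?mulr0];
  rewrite /= eqxx; subst; rewrite ?nA ?nB ?nC ?nD ?n7 ?n8 ?n9 ?n10 eqxx !mul1r mulr1 !rgamma_nat /alpha /beta ?exprS ?expr0;
  field; rewrite ?sc1 ?sc2 //.

Lemma LHS_eq (R : realType) (j1 j2 : R) (p r : bool) (n : nat) :
    (n`!%:R * (-1) ^+ p.+1)%:C *:
    \sum_(k < (n.*2).+2)
      ((-1) ^+ ((k.+1 - p)./2)
        * rgamma (1 + (k./2)%:R)
        * rgamma (1 + (((n.*2).+1 - k)./2)%:R)
        * rgamma (2 * j1 + (uphalf k)%:R)
        * rgamma (2 * j2 + (uphalf ((n.*2).+1 - k))%:R))%:C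
      *: tens (iter k (Uplus (chiral r j1)) (Omega R)) (iter ((n.*2).+1 - k) (Uplus (chiral r j2)) (Omega R))
  = @Tf R j1 j2 p n.
Proof.
rewrite !Uplus_chiral Omega_ev.
apply: boolp.funext => -[b1 m1]; apply: boolp.funext => -[b2 m2].
rewrite scal_at tsum_at.
under eq_bigr => k _ do rewrite scal_at /tens !iterU !evk_at.
rewrite /Tf /=.
case: p; case: b1; case: b2 => /=; rewrite ?if_same ?add0n ?add1n.
all: try (rewrite big1 ?mulr0 // => k _; case: eqP => ek; case: eqP => ek2;
     rewrite ?mul0r ?mulr0 ?mul1r //; exfalso; have := ltn_ord k; lia).
all: case: eqP => [e|ne]; last first.
  all: try (rewrite big1 ?mulr0 // => k _; case: eqP => ek; case: eqP => ek2;
     rewrite ?mul0r ?mulr0 ?mul1r //; exfalso; have := ltn_ord k; lia).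
- nzt n (m1.*2.+1)%N.
- nzt n (m1.*2)%N.
- nzt n (m1.*2.+1)%N.
- nzt n (m1.*2)%N.
Qed.

Lemma tsub_at (R : realType) (f g : tvec R) i j : (f - g) i j = f i j - g i j.
Proof. by []. Qed.

Lemma shift1 (R : realType) (c : R) k : c + 1 + k%:R = c + k.+1%:R.
Proof. by rewrite -natr1 addrA [c + 1 + _]addrAC. Qed.

Lemma binR (R : realType) a b : ('C(a + b, a)%:R : R) = (a + b)`!%:R / (a`!%:R * b`!%:R).
Proof.
have := bin_fact (leq_addr b a); rewrite addKn => h.
apply: (mulIf (mulf_neq0 (sc1 R a) (sc1 R b))).
rewrite mulfVK ?mulf_neq0 ?sc1 // -!natrM h //.
Qed.

Lemma RHS_eq (R : realType) (j1 j2 : R) (p r : bool) (n : nat) :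
  \sum_(i < n.+1)
            ('C(n, i)%:R * (-1) ^+ i)%:C *:
            ((rgamma (2 * j1 + 1 + i%:R) * rgamma (2 * j2 + (n - i)%:R))%:C
               *: tens (iter i (chiral r j1 GLp) (chiral r j1 (genX r) (Omega R))) (iter (n - i) (chiral r j2 GLp) (Omega R))
             - ((-1) ^+ p * rgamma (2 * j1 + i%:R)
                  * rgamma (2 * j2 + 1 + (n - i)%:R))%:C
               *: tens (iter i (chiral r j1 GLp) (Omega R)) (iter (n - i) (chiral r j2 GLp) (chiral r j2 (genX r) (Omega R))))
  = @Tf R j1 j2 p n.
Proof.
rewrite !X_chiral !Lp_chiral Omega_ev.
apply: boolp.funext => -[b1 m1]; apply: boolp.funext => -[b2 m2].
rewrite tsum_at.
under eq_bigr => k _ do rewrite !iterL scal_at tsub_at !scal_at /tens /ev /=.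
rewrite /Tf /=.
case: b1; case: b2 => /=; rewrite ?if_same.
all: try (rewrite big1 // => k _; rewrite ?(mulr0, mul0r, subrr, subr0, oppr0) //; case: eqP => ?; case: eqP => ?;
     rewrite ?(mulr0, mul0r, mul1r, subrr, subr0, sub0r, oppr0) //; exfalso; have := ltn_ord k; lia).
all: symmetry; case: ifP => [/eqP e|/eqP ne]; symmetry; last first.
  all: try (rewrite big1 // => k _; rewrite ?(mulr0, mul0r, subrr, subr0, oppr0) //; case: eqP => ?; case: eqP => ?;
     rewrite ?(mulr0, mul0r, mul1r, subrr, subr0, sub0r, oppr0) //; exfalso; have := ltn_ord k; lia).
all: have hK : (m1 < n.+1)%N by lia.
all: rewrite (@sum_pick _ _ _ _ hK); last by move=> ? hk0; rewrite [m1 == _]eq_sym (negbTE hk0) ?(mulr0, mul0r, subrr, subr0, sub0r, oppr0).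
all: rewrite /= eqxx; subst n; rewrite addKn eqxx ?(mulr0, mul0r, mul1r, subrr, subr0, sub0r, oppr0) binR !shift1 /alpha /beta.
all: by field; rewrite ?sc1 ?sc2.
Qed.

Theorem mainTheorem3 (R : realType) (j1 j2 : R) (p : bool) (right : bool)
    (n : nat) :
  let M1 := chiral right j1 in
  let M2 := chiral right j2 in
  let X := genX right in
  let Psi := Omega R in
  let T : tvec R :=
    (n`!%:R * (-1) ^+ p.+1)%:C *:
    \sum_(k < (n.*2).+2)
      ((-1) ^+ ((k.+1 - p)./2)
        * rgamma (1 + (k./2)%:R)
        * rgamma (1 + (((n.*2).+1 - k)./2)%:R)
        * rgamma (2 * j1 + (uphalf k)%:R)
        * rgamma (2 * j2 + (uphalf ((n.*2).+1 - k))%:R))%:C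
      *: tens (iter k (Uplus M1) Psi) (iter ((n.*2).+1 - k) (Uplus M2) Psi) in
  T = \sum_(i < n.+1)
            ('C(n, i)%:R * (-1) ^+ i)%:C *:
            ((rgamma (2 * j1 + 1 + i%:R) * rgamma (2 * j2 + (n - i)%:R))%:C
               *: tens (iter i (M1 GLp) (M1 X Psi)) (iter (n - i) (M2 GLp) Psi)
             - ((-1) ^+ p * rgamma (2 * j1 + i%:R)
                  * rgamma (2 * j2 + 1 + (n - i)%:R))%:C
               *: tens (iter i (M1 GLp) Psi) (iter (n - i) (M2 GLp) (M2 X Psi)))
  /\ [/\ tact p M1 M2 GLm T = 0,
      tact p M1 M2 GVm T = 0,
      tact p M1 M2 GWm T = 0,
      tact p M1 M2 GL T = (j1 + j2 + n%:R + 1 / 2)%:C *: T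
    & tact p M1 M2 GB T =
        (if right then (j1 + j2) - 1 / 2 else - (j1 + j2) + 1 / 2)%:C *: T].
Proof.
move=> M1 M2 X Psi T.
have eT : T = @Tf R j1 j2 p n by exact: LHS_eq.
rewrite eT; split.
  by symmetry; exact: RHS_eq.
split.
- exact: hw_Lm.
- exact: hw_Vm.
- exact: hw_Wm.
- exact: hw_L.
- exact: hw_B.
Qed.
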